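(* Let $g>0$ be an integer and let $P_g(x,y,z,q)$ be the Laurent polynomial \[ P_g(x,y,z,q):=(-1)^gq^{-g}\Big(y^{-g}z^{g}\prod_{i=1}^{g}(yq^i-1)+y^{g}z^{-g}\prod_{i=1}^{g}(zq^i-1)\Big) +\sum_{\substack{0\le t',u'\le g-1\\ t'+u'\le g}}(-1)^{t'+u'}\binom{g}{t';u';g-t'-u'}_q\,y^{u'-t'}z^{t'-u'}q^{t'u'-t'-u'}(x-yq^{t'}-zq^{u'}+1)\prod_{i=1}^{g-t'-1}(zq^i-1)\prod_{i=1}^{g-u'-1}(yq^i-1), \] viewed as a Laurent polynomial in $x,y,z$ with coefficients in $\mathbb{Q}(q)$. Define the weight of a monomial $x^\alpha y^\beta z^\gamma$ to be $2\alpha+\beta+\gamma$. Then among the monomials appearing in $P_g$ with nonzero coefficient there is a unique one of maximal weight, namely $x\,y^{g-1}z^{g-1}$.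
   Context: $[m]!_q=\prod_{i=1}^m(1+q+\dots+q^{i-1})$ and $\binom{g}{a;b;g-a-b}_q=[g]!_q/([a]!_q[b]!_q[g-a-b]!_q)$. *)

(* Defs.v *)
From HB Require Import structures.
From mathcomp Require Import all_boot all_order all_algebra.
From mathcomp Require Import fraction.
Set Implicit Arguments. Unset Strict Implicit. Unset Printing Implicit Defensive.
Import Order.TTheory GRing.Theory Num.Theory.
Local Open Scope ring_scope.

Definition Fq : fieldType := {fraction {poly rat}}.
Definition q : Fq := tofrac ('X : {poly rat}).

Definition qfact (m : nat) : Fq :=
  \prod_(1 <= i < m.+1) \sum_(j < i) q ^+ j.
Definition qmultinom (g a b : nat) : Fq :=
  qfact g / (qfact a * qfact b * qfact (g - a - b)%N).

(* Laurent polynomials in x, y, z over Fq, represented as formal finite sums of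
   terms (exponent triple, coefficient); the actual Laurent polynomial is the
   coefficient function [lcoef] below (repetitions are summed). *)
Definition mono := (int * int * int)%type.
Definition lpoly := seq (mono * Fq).

Definition madd (m1 m2 : mono) : mono :=
  (m1.1.1 + m2.1.1, m1.1.2 + m2.1.2, m1.2 + m2.2).

Definition lp_mon (m : mono) (c : Fq) : lpoly := [:: (m, c)].
Definition lp_const (c : Fq) : lpoly := lp_mon (0, 0, 0) c.
Definition lp_add (p r : lpoly) : lpoly := p ++ r.
Definition lp_sum (ps : seq lpoly) : lpoly := flatten ps.
Definition lp_mul (p r : lpoly) : lpoly :=
  [seq (madd t1.1 t2.1, t1.2 * t2.2) | t1 <- p, t2 <- r].
Definition lp_prod (ps : seq lpoly) : lpoly := foldr lp_mul (lp_const 1) ps.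

Definition lcoef (p : lpoly) (m : mono) : Fq :=
  \sum_(t <- p | t.1 == m) t.2.

Definition weight (m : mono) : int := 2 * m.1.1 + m.1.2 + m.2.

Definition X : lpoly := lp_mon (1, 0, 0) 1.
Definition Yc (c : Fq) : lpoly := lp_mon (0, 1, 0) c.
Definition Zc (c : Fq) : lpoly := lp_mon (0, 0, 1) c.

Definition prodY (n : nat) : lpoly :=
  lp_prod [seq lp_add (Yc (q ^+ i)) (lp_const (-1)) | i <- iota 1 n].
Definition prodZ (n : nat) : lpoly :=
  lp_prod [seq lp_add (Zc (q ^+ i)) (lp_const (-1)) | i <- iota 1 n].

Definition Pterm (g t u : nat) : lpoly :=
  lp_mul
    (lp_mon (0, (u%:Z - t%:Z), (t%:Z - u%:Z))
       ((-1) ^+ (t + u) * qmultinom g t u * q ^ ((t * u)%N%:Z - t%:Z - u%:Z)))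
    (lp_mul
       (lp_sum [:: X; Yc (- q ^+ t); Zc (- q ^+ u); lp_const 1])
       (lp_mul (prodZ (g - t - 1)%N) (prodY (g - u - 1)%N))).

Definition Pg (g : nat) : lpoly :=
  lp_add
    (lp_mul (lp_const ((-1) ^+ g * q ^ (- g%:Z)))
       (lp_add
          (lp_mul (lp_mon (0, - g%:Z, g%:Z) 1) (prodY g))
          (lp_mul (lp_mon (0, g%:Z, - g%:Z) 1) (prodZ g))))
    (lp_sum [seq (if (t + u <= g)%N then Pterm g t u else [::])
            | t <- iota 0 g, u <- iota 0 g]).

(* Main.v *)
Require Import Defs.
From HB Require Import structures.
From mathcomp Require Import all_boot all_order all_algebra fraction.
From mathcomp Require Import ring lra zify.
Set Implicit Arguments. Unset Strict Implicit. Unset Printing Implicit Defensive.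
Import Order.TTheory GRing.Theory Num.Theory.
Local Open Scope ring_scope.

Definition LEs (p : lpoly) (w : int) := all (fun t : mono * Fq => weight t.1 <= w) p.
Definition LT (p : lpoly) (w : int) (m : mono) :=
  all (fun t : mono * Fq => (t.1 == m) || (weight t.1 < w)) p.

Lemma weight_madd a b : weight (madd a b) = weight a + weight b.
Proof. rewrite /weight /madd /=; ring. Qed.

Lemma lcoef_cat p r m : lcoef (p ++ r) m = lcoef p m + lcoef r m.
Proof. by rewrite /lcoef big_cat. Qed.

Lemma lcoef_flatten l m : lcoef (flatten l) m = \sum_(p <- l) lcoef p m.
Proof. elim: l => [|p l IH]; first by rewrite big_nil /lcoef big_nil.
by rewrite /= lcoef_cat IH big_cons. Qed.

Lemma all_flatten' (P : pred (mono * Fq)) l : all P (flatten l) = all (all P) l.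
Proof. by elim: l => //= p l IH; rewrite all_cat IH. Qed.

Lemma LEs_mul p r a b : LEs p a -> LEs r b -> LEs (lp_mul p r) (a + b).
Proof.
move=> /allP Hp /allP Hr; apply/all_allpairsP => t1 t2 h1 h2 /=.
by rewrite weight_madd lerD // ?Hp ?Hr.
Qed.

Lemma LEs_weak p a b : LEs p a -> a <= b -> LEs p b.
Proof. move=> /allP H ab; apply/allP => t /H /= h; exact: le_trans h ab. Qed.

Lemma LT_mul p r a b m1 m2 : weight m1 = a -> weight m2 = b ->
  LT p a m1 -> LT r b m2 -> LT (lp_mul p r) (a + b) (madd m1 m2).
Proof.
move=> w1 w2 /allP Hp /allP Hr; apply/all_allpairsP => t1 t2 h1 h2 /=.
move: (Hp _ h1) (Hr _ h2) => /orP[/eqP e1|l1] /orP[/eqP e2|l2].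
- by rewrite e1 e2 eqxx.
- by rewrite weight_madd e1 w1 ltrD2l l2 orbT.
- by rewrite weight_madd e2 w2 ltrD2r l1 orbT.
- by rewrite weight_madd ltrD // orbT.
Qed.

Lemma lcoef_mul p r a b m1 m2 : weight m1 = a -> weight m2 = b ->
  LT p a m1 -> LT r b m2 ->
  lcoef (lp_mul p r) (madd m1 m2) = lcoef p m1 * lcoef r m2.
Proof.
move=> w1 w2 /allP Hp /allP Hr.
rewrite /lcoef /lp_mul big_mkcond big_allpairs_dep /=.
rewrite big_distrl /= [RHS]big_mkcond /=.
have key : forall t1 t2, t1 \in p -> t2 \in r ->
  (madd t1.1 t2.1 == madd m1 m2) = (t1.1 == m1) && (t2.1 == m2).
  move=> [a1 c1] [a2 c2] h1 h2 /=.
  move: (Hp _ h1) (Hr _ h2) => /= /orP[/eqP e1|l1] /orP[/eqP e2|l2].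
  - by subst a1 a2; rewrite !eqxx.
  - subst a1; rewrite eqxx /=; apply/idP/idP => [/eqP E|/eqP ->//].
    by move: (congr1 weight E); rewrite !weight_madd w1 w2 => /addrI E'; move: l2; rewrite E' ltxx.
  - subst a2; rewrite eqxx andbT; apply/idP/idP => [/eqP E|/eqP ->//].
    by move: (congr1 weight E); rewrite !weight_madd w1 w2 => /addIr E'; move: l1; rewrite E' ltxx.
  - have -> : (a1 == m1) = false by apply/negP => /eqP e; move: l1; rewrite e w1 ltxx.
    apply/negP => /eqP E; move: (congr1 weight E); rewrite !weight_madd w1 w2 => E'.
    by move: (ltrD l1 l2); rewrite E' ltxx.
apply: eq_big_seq => t1 h1.
case e: (t1.1 == m1).
  rewrite big_distrr /= [in RHS]big_mkcond /=.
  apply: eq_big_seq => t2 h2.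
  by rewrite key // e /=; case: (t2.1 == m2); rewrite ?mulr0.
by rewrite big1_seq // => t2 h2; rewrite key // e.
Qed.

Lemma LEs_lcoef0 p w m : LEs p w -> w < weight m -> lcoef p m = 0.
Proof.
move=> /allP H wm; rewrite /lcoef big_seq_cond big1 // => t /andP[/H ht /eqP e].
by move: (le_lt_trans ht wm); rewrite e ltxx.
Qed.

Lemma LEs_LT p w m : LEs p w -> w < weight m -> LT p (weight m) m.
Proof. move=> /allP H wm; apply/allP => t /H ht; by rewrite (le_lt_trans ht wm) orbT. Qed.

Lemma LT_LEs p w m : LT p w m -> weight m = w -> LEs p w.
Proof. move=> /allP H wm; apply/allP => t /H /orP[/eqP ->|/ltW //]; by rewrite wm. Qed.

Lemma LT_cat p r w m : LT p w m -> LT r w m -> LT (p ++ r) w m.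
Proof. by rewrite /LT all_cat => -> ->. Qed.

Lemma LEs_cat p r w : LEs p w -> LEs r w -> LEs (p ++ r) w.
Proof. by rewrite /LEs all_cat => -> ->. Qed.

Lemma prod_lemma (f : nat -> lpoly) (e : mono) (c : nat -> Fq) (M : nat -> mono) :
  weight e = 1 -> M 0%N = (0,0,0) -> (forall n, madd e (M n) = M n.+1) ->
  (forall n, weight (M n) = n%:Z) ->
  (forall i, LT (f i) 1 e /\ lcoef (f i) e = c i) ->
  forall s, LT (lp_prod (map f s)) (size s)%:Z (M (size s)) /\
            lcoef (lp_prod (map f s)) (M (size s)) = \prod_(i <- s) c i.
Proof.
move=> we M0 MS wM Hf; elim => [|i s [IH1 IH2]].
  rewrite /= M0 big_nil; split; first by rewrite /LT /= ?eqxx.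
  by rewrite /lcoef /lp_const /lp_mon big_cons big_nil eqxx addr0.
have [F1 F2] := Hf i.
rewrite /= -MS big_cons -IH2 -F2; split.
  by rewrite intS; apply: LT_mul => //; rewrite wM.
by apply: (lcoef_mul (a:=1) (b:=(size s)%:Z)) => //; rewrite wM.
Qed.

Lemma prodY_lem n : LT (prodY n) n%:Z (0, n%:Z, 0) /\
  lcoef (prodY n) (0, n%:Z, 0) = \prod_(i <- iota 1 n) q ^+ i.
Proof.
have := @prod_lemma (fun i => lp_add (Yc (q ^+ i)) (lp_const (-1))) (0,1,0)
  (fun i => q ^+ i) (fun n => (0, n%:Z, 0)).
move=> /(_ _ _ _ _ _ (iota 1 n)); rewrite size_iota; apply => //; try by move=> k; rewrite /weight /=; ring.
move=> i; split; first by rewrite /LT /= ?eqxx.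
  by rewrite /lcoef /lp_add /Yc /lp_const /lp_mon big_cons big_cons big_nil eqxx /= addr0.
Qed.

Lemma prodZ_lem n : LT (prodZ n) n%:Z (0, 0, n%:Z) /\
  lcoef (prodZ n) (0, 0, n%:Z) = \prod_(i <- iota 1 n) q ^+ i.
Proof.
have := @prod_lemma (fun i => lp_add (Zc (q ^+ i)) (lp_const (-1))) (0,0,1)
  (fun i => q ^+ i) (fun n => (0, 0, n%:Z)).
move=> /(_ _ _ _ _ _ (iota 1 n)); rewrite size_iota; apply => //; try by move=> k; rewrite /weight /=; ring.
move=> i; split; first by rewrite /LT /= ?eqxx.
  by rewrite /lcoef /lp_add /Zc /lp_const /lp_mon big_cons big_cons big_nil eqxx /= addr0.
Qed.

Lemma S_LT t u : LT (lp_sum [:: X; Yc (- q ^+ t); Zc (- q ^+ u); lp_const 1]) 2 (1,0,0)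
  /\ lcoef (lp_sum [:: X; Yc (- q ^+ t); Zc (- q ^+ u); lp_const 1]) (1,0,0) = 1.
Proof.
split; first by rewrite /LT /= ?eqxx.
by rewrite /lcoef /= !big_cons big_nil /= addr0.
Qed.

Lemma mon_LT (m : mono) c : weight m = 0 -> LT (lp_mon m c) 0 m /\ lcoef (lp_mon m c) m = c.
Proof.
move=> wm; split; first by rewrite /LT /= eqxx.
by rewrite /lcoef big_cons big_nil eqxx addr0.
Qed.

Lemma Pterm_LEs g t u : (t < g)%N -> (u < g)%N ->
  LEs (Pterm g t u) (0 + (2 + ((g - t - 1)%N%:Z + (g - u - 1)%N%:Z))).
Proof.
move=> tg ug; rewrite /Pterm.
apply: LEs_mul.
  apply: (LT_LEs (mon_LT _ _).1); rewrite /weight /=; ring.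
apply: LEs_mul; first exact: (LT_LEs (S_LT t u).1).
apply: LEs_mul; first by apply: (LT_LEs (prodZ_lem _).1); rewrite /weight /=; ring.
apply: (LT_LEs (prodY_lem _).1); rewrite /weight /=; ring.
Qed.

Lemma q_neq0 : q != 0.
Proof. by rewrite /q tofrac_eq0 polyX_eq0. Qed.

Lemma qfact_neq0 m : qfact m != 0.
Proof.
rewrite /qfact prodf_seq_neq0; apply/allP => i; rewrite mem_index_iota => /andP[i1 _] /=.
case: i i1 => // k _.
have -> : \sum_(j < k.+1) q ^+ j = tofrac (\sum_(j < k.+1) ('X : {poly rat}) ^+ j).
  by rewrite rmorph_sum; apply: eq_bigr => j _; rewrite rmorphXn.
rewrite tofrac_eq0; apply/eqP => H; have := congr1 (fun p : {poly rat} => p`_0) H.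
rewrite coef_sum coef0 big_ord_recl /= expr0 coef1 /= big1 ?addr0 //.
by move=> j _; rewrite coefXn.
Qed.

Lemma Pterm_top g t u :
  let a := (g - t - 1)%N in let b := (g - u - 1)%N in
  let c := (-1) ^+ (t + u) * qmultinom g t u * q ^ ((t * u)%N%:Z - t%:Z - u%:Z) in
  let m := madd (0, (u%:Z - t%:Z), (t%:Z - u%:Z)) (madd (1,0,0) (madd (0,0,a%:Z) (0,b%:Z,0))) in
  LT (Pterm g t u) (0 + (2 + (a%:Z + b%:Z))) m /\
  lcoef (Pterm g t u) m = c * (1 * (\prod_(i <- iota 1 a) q ^+ i * \prod_(i <- iota 1 b) q ^+ i)).
Proof.
move=> a b c m.
have w0 : weight (0, (u%:Z - t%:Z), (t%:Z - u%:Z)) = 0 by rewrite /weight /=; ring.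
have wa : weight (0, 0, a%:Z) = a%:Z by rewrite /weight /=; ring.
have wb : weight (0, b%:Z, 0) = b%:Z by rewrite /weight /=; ring.
have w1 : weight (1, 0, 0) = 2 by rewrite /weight /=; ring.
have [hM cM] := mon_LT c w0.
have [hS cS] := S_LT t u.
have [hZ cZ] := prodZ_lem a.
have [hY cY] := prodY_lem b.
have hZY := LT_mul wa wb hZ hY.
have wZY : weight (madd (0,0,a%:Z) (0,b%:Z,0)) = a%:Z + b%:Z by rewrite weight_madd wa wb.
have hSZY := LT_mul w1 wZY hS hZY.
have wSZY : weight (madd (1,0,0) (madd (0,0,a%:Z) (0,b%:Z,0))) = 2 + (a%:Z + b%:Z)
  by rewrite weight_madd w1 wZY.
split; first exact: LT_mul w0 wSZY hM hSZY.
rewrite /Pterm /m (lcoef_mul w0 wSZY hM hSZY) (lcoef_mul w1 wZY hS hZY) (lcoef_mul wa wb hZ hY).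
by rewrite cM cS cZ cY.
Qed.

Lemma LT_lcoef p w m' m : LT p w m' -> lcoef p m != 0 -> m != m' -> weight m < w.
Proof.
move=> /allP H nz ne; apply/negPn/negP => hw; move/eqP: nz; apply.
rewrite /lcoef big_seq_cond big1 // => t /andP[/H ht /eqP e].
by move: ht; rewrite e (negPf ne) (negPf hw).
Qed.

Theorem proposition5p5 (g : nat) (hg : (0 < g)%N) :
  let mmax : mono := (1%:Z, (g.-1)%:Z, (g.-1)%:Z) in
  lcoef (Pg g) mmax != 0 /\
  (forall m : mono, lcoef (Pg g) m != 0 -> m != mmax -> weight m < weight mmax).
Proof.
case: g hg => [//|n] _ mmax /=.
set W := weight mmax.
have wW : W = 2 + (n%:Z + n%:Z) by rewrite /W /weight /=; ring.
have [hT cT] := Pterm_top n.+1 0 0.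
have Em : madd (0, (0%N%:Z - 0%N%:Z), (0%N%:Z - 0%N%:Z))
   (madd (1,0,0) (madd (0,0,(n.+1 - 0 - 1)%N%:Z) (0,(n.+1 - 0 - 1)%N%:Z,0))) = mmax.
  by rewrite /madd /mmax /= subn0 subn1 /=; congr (_,_,_); ring.
rewrite Em in hT cT.
have EW : 0 + (2 + ((n.+1 - 0 - 1)%N%:Z + (n.+1 - 0 - 1)%N%:Z)) = W.
  by rewrite wW subn0 subn1 /=; ring.
rewrite EW in hT.
rewrite /Pg; set A := lp_mul (lp_const _) _.
have HA : LEs A n.+1%:Z.
  apply: (LEs_weak (LEs_mul (a:=0) (b:=0 + n.+1%:Z) _ _)); last by rewrite add0r.
    by rewrite /LEs /= /weight /=.
  apply: LEs_cat; apply: LEs_mul.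
  - by apply: (LT_LEs (mon_LT _ _).1); rewrite /weight /=; ring.
  - by apply: (LT_LEs (prodY_lem _).1); rewrite /weight /=; ring.
  - by apply: (LT_LEs (mon_LT _ _).1); rewrite /weight /=; ring.
  - by apply: (LT_LEs (prodZ_lem _).1); rewrite /weight /=; ring.
set F := fun t u => if (t + u <= n.+1)%N then Pterm n.+1 t u else [::].
have Hrest : forall t u, (t < n.+1)%N -> (u < n.+1)%N -> (0 < t + u)%N -> LEs (F t u) (W - 1).
  move=> t u ht hu htu; rewrite /F; case: ifP => _; last by [].
  apply: (LEs_weak (Pterm_LEs ht hu)); rewrite wW; lia.
have HAW : n.+1%:Z < W by rewrite wW; lia.
have HP : LT (Pg n.+1) W mmax.
  rewrite /Pg /lp_add; apply: LT_cat; first exact: LEs_LT HA HAW.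
  rewrite /LT /lp_sum all_flatten'; apply/all_allpairsP => t u; rewrite !mem_iota => /andP[_ ht] /andP[_ hu].
  case: (posnP (t + u)) => [e|p].
    have t0 : t = 0%N by lia.
    have u0 : u = 0%N by lia.
    by subst t u; exact: hT.
  have H1 : W - 1 < weight mmax by rewrite -/W; lia.
  exact: LEs_LT (Hrest t u ht hu p) H1.
split; last by move=> m; exact: LT_lcoef HP.
rewrite lcoef_cat (LEs_lcoef0 HA HAW) add0r /lp_sum lcoef_flatten big_allpairs_dep.
have -> : iota 0 n.+1 = 0%N :: iota 1 n by [].
have Z2 : \sum_(t <- iota 1 n) \sum_(u <- 0%N :: iota 1 n) lcoef (F t u) mmax = 0.
  apply: big1_seq => t; rewrite mem_iota => /andP[t1 tn].
  apply: big1_seq => u hu0.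
  have hu : (u < n.+1)%N by move: hu0; rewrite -[0%N :: _]/(iota 0 n.+1) mem_iota.
  apply: (LEs_lcoef0 (Hrest t u _ _ _)); try lia.
have Z1 : \sum_(u <- iota 1 n) lcoef (F 0%N u) mmax = 0.
  apply: big1_seq => u; rewrite mem_iota => /andP[u1 un].
  apply: (LEs_lcoef0 (Hrest 0%N u _ _ _)); try lia.
rewrite big_cons big_cons Z1 Z2 !Monoid.mulm1 leq0n cT.
have hp : forall k, \prod_(i <- iota 1 k) q ^+ i != 0.
  by move=> k; rewrite prodf_seq_neq0; apply/allP => i _ /=; rewrite expf_neq0 ?q_neq0.
apply: mulf_neq0; last by rewrite mul1r; apply: mulf_neq0; apply: hp.
apply: mulf_neq0; last exact: expfz_neq0 q_neq0.
apply: mulf_neq0; first by rewrite signr_eq0.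
rewrite /qmultinom; apply: mulf_neq0; first exact: qfact_neq0.
rewrite invr_neq0 //; apply: mulf_neq0; first apply: mulf_neq0; exact: qfact_neq0.
Qed.
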